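(* Let $d=1$, $I=[a,b]$ with $a<b$, and let $\sigma$ be as in the context with $\sigma(1)<1$ and the exponent $\alpha$ of condition $(\Sigma3)$ satisfying $\alpha>2$. Let $f\in C([a,b])$. Then $$\|K_n(f,\cdot)-f(\cdot)\|_\infty=o(n^{-1}),\qquad n\to+\infty,$$ if and only if $f$ is constant on $[a,b]$.
   Context: $\sigma:\mathbb R\to\mathbb R$ is a non-decreasing sigmoidal function ($\lim_{x\to-\infty}\sigma(x)=0$, $\lim_{x\to+\infty}\sigma(x)=1$) satisfying: $(\Sigma1)$ $\sigma(x)-1/2$ is odd; $(\Sigma2)$ $\sigma\in C^2(\mathbb R)$ and concave on $[0,+\infty)$; $(\Sigma3)$ $\sigma(x)=\mathcal O(|x|^{-1-\alpha})$ as $x\to-\infty$ for some $\alpha>0$. $\phi_\sigma(x):=\frac12[\sigma(x+1)-\sigma(x-1)]$. With $\mathcal K_n:=\{k\in\mathbb Z:\lceil na\rceil\le k\le\lfloor nb\rfloor-1\}$, for $n\in\mathbb N^+$ and $x\in[a,b]$, $$K_n(f,x):=\frac{\sum_{k\in\mathcal K_n}\big[n\int_{k/n}^{(k+1)/n}f(u)du\big]\phi_\sigma(nx-k)}{\sum_{k\in\mathcal K_n}\phi_\sigma(nx-k)},$$ and $\|\cdot\|_\infty$ is the sup-norm on $[a,b]$. *)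

(* Defs.v *)
From Stdlib Require Import Reals Lra Lia ZArith List.
From Coquelicot Require Import Coquelicot.
Open Scope R_scope.

(* floor and ceiling on R (up x is the least integer > x) *)
Definition Rfloor (x : R) : Z := (up x - 1)%Z.
Definition Rceil (x : R) : Z := (- Rfloor (- x))%Z.

Definition sigmoidal (s : R -> R) : Prop :=
  (forall x y, x <= y -> s x <= s y) /\
  is_lim s m_infty 0 /\ is_lim s p_infty 1.

Definition Sigma1 (s : R -> R) : Prop :=
  forall x, s (- x) - / 2 = - (s x - / 2).

Definition Sigma2 (s : R -> R) : Prop :=
  (forall x, ex_derive s x) /\
  (forall x, ex_derive (Derive s) x) /\
  (forall x, continuous (Derive_n s 2) x) /\
  (forall x y t, 0 <= x -> 0 <= y -> 0 <= t <= 1 ->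
     t * s x + (1 - t) * s y <= s (t * x + (1 - t) * y)).

Definition Sigma3_with (s : R -> R) (alpha : R) : Prop :=
  exists C X, 0 < X /\
    forall x, x <= - X -> Rabs (s x) <= C * Rpower (Rabs x) (- 1 - alpha).

Definition phi_sigma (s : R -> R) (x : R) : R := (s (x + 1) - s (x - 1)) / 2.

Definition Kset (a b : R) (n : nat) : list Z :=
  map (fun i => (Rceil (INR n * a) + Z.of_nat i)%Z)
      (seq 0 (Z.to_nat (Rfloor (INR n * b) - Rceil (INR n * a)))).

Definition sumZ (l : list Z) (g : Z -> R) : R :=
  fold_right (fun k acc => g k + acc) 0 l.

Definition Kant (s : R -> R) (a b : R) (n : nat) (f : R -> R) (x : R) : R :=
  sumZ (Kset a b n)
    (fun k => (INR n * RInt f (IZR k / INR n) ((IZR k + 1) / INR n))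
              * phi_sigma s (INR n * x - IZR k))
  / sumZ (Kset a b n) (fun k => phi_sigma s (INR n * x - IZR k)).

Definition continuous_on_ab (f : R -> R) (a b : R) : Prop :=
  forall x, a <= x <= b -> forall eps, 0 < eps -> exists delta, 0 < delta /\
    forall y, a <= y <= b -> Rabs (y - x) < delta -> Rabs (f y - f x) < eps.

(* Main.v *)
Require Import Defs.
From Stdlib Require Import Reals Lra Lia ZArith List.
From Coquelicot Require Import Coquelicot.
Open Scope R_scope.

Fixpoint ssum (g : nat -> R) (M : nat) : R :=
  match M with O => 0 | S M' => ssum g M' + g M' end.

Lemma ssum_ext (g h : nat -> R) M :
  (forall i, (i < M)%nat -> g i = h i) -> ssum g M = ssum h M.
Proof.
  induction M; simpl; intros H; auto.
  rewrite IHM by (intros; apply H; lia). rewrite H by lia. auto.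
Qed.

Lemma ssum_front (g : nat -> R) M :
  ssum g (S M) = g O + ssum (fun i => g (S i)) M.
Proof.
  induction M; simpl in *. lra. rewrite IHM. lra.
Qed.

Lemma ssum_add (g : nat -> R) M1 M2 :
  ssum g (M1 + M2) = ssum g M1 + ssum (fun i => g (M1 + i)%nat) M2.
Proof.
  induction M2; simpl. rewrite Nat.add_0_r. lra.
  rewrite Nat.add_succ_r. simpl. rewrite IHM2. lra.
Qed.

Lemma ssum_plus (g h : nat -> R) M :
  ssum (fun i => g i + h i) M = ssum g M + ssum h M.
Proof. induction M; simpl; lra. Qed.

Lemma ssum_minus (g h : nat -> R) M :
  ssum (fun i => g i - h i) M = ssum g M - ssum h M.
Proof. induction M; simpl; lra. Qed.

Lemma ssum_scal (c : R) (g : nat -> R) M :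
  ssum (fun i => c * g i) M = c * ssum g M.
Proof. induction M; simpl; lra. Qed.

Lemma ssum_const (c : R) M : ssum (fun _ => c) M = INR M * c.
Proof. induction M; simpl. lra. rewrite IHM. destruct M; simpl; lra. Qed.

Lemma ssum_le (g h : nat -> R) M :
  (forall i, (i < M)%nat -> g i <= h i) -> ssum g M <= ssum h M.
Proof.
  induction M; simpl; intros H. lra.
  assert (ssum g M <= ssum h M) by (apply IHM; intros; apply H; lia).
  assert (g M <= h M) by (apply H; lia). lra.
Qed.

Lemma ssum_nonneg (g : nat -> R) M :
  (forall i, (i < M)%nat -> 0 <= g i) -> 0 <= ssum g M.
Proof.
  intros H. replace 0 with (ssum (fun _ => 0) M).
  apply ssum_le; auto. rewrite ssum_const; lra.
Qed.

Lemma ssum_abs (g : nat -> R) M : Rabs (ssum g M) <= ssum (fun i => Rabs (g i)) M.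
Proof.
  induction M; simpl. rewrite Rabs_R0; lra.
  eapply Rle_trans. apply Rabs_triang. lra.
Qed.

Lemma ssum_rev (g : nat -> R) M :
  ssum g M = ssum (fun m => g (M - 1 - m)%nat) M.
Proof.
  induction M. reflexivity.
  rewrite (ssum_front (fun m => g (S M - 1 - m)%nat)).
  change (ssum g (S M)) with (ssum g M + g M). rewrite IHM.
  replace (S M - 1 - 0)%nat with M by lia.
  rewrite Rplus_comm. f_equal. apply ssum_ext. intros i Hi. f_equal. lia.
Qed.

Lemma ssum_swap (g : nat -> nat -> R) M1 M2 :
  ssum (fun i => ssum (fun j => g i j) M2) M1 =
  ssum (fun j => ssum (fun i => g i j) M1) M2.
Proof.
  induction M1; simpl.
  - symmetry. rewrite <- (Rmult_0_l 0) at 1. induction M2; simpl; lra.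
  - rewrite IHM1. rewrite <- ssum_plus. reflexivity.
Qed.

Lemma ssum_pair (g : nat -> R) M :
  ssum g (2 * M) = ssum (fun l => g (2 * l)%nat + g (2 * l + 1)%nat) M.
Proof.
  induction M. reflexivity.
  replace (2 * S M)%nat with (S (S (2 * M))) by lia.
  change (ssum g (S (S (2 * M)))) with (ssum g (2*M) + g (2*M)%nat + g (S (2*M))).
  change (ssum (fun l => g (2 * l)%nat + g (2 * l + 1)%nat) (S M)) with
    (ssum (fun l => g (2 * l)%nat + g (2 * l + 1)%nat) M + (g (2 * M)%nat + g (2 * M + 1)%nat)).
  rewrite IHM. replace (S (2*M)) with (2*M+1)%nat by lia. lra.
Qed.

Lemma ssum_telescope (F : nat -> R) M :
  ssum (fun i => F (S i) - F i) M = F M - F O.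
Proof. induction M; simpl. lra. rewrite IHM. lra. Qed.

Lemma sumZ_seq (h : nat -> Z) (g : Z -> R) s L :
  sumZ (map h (seq s L)) g = ssum (fun i => g (h (s + i)%nat)) L.
Proof.
  revert s. induction L; intros s. reflexivity.
  rewrite ssum_front. simpl. unfold sumZ in *. simpl. rewrite IHL.
  rewrite Nat.add_0_r. f_equal. apply ssum_ext. intros. f_equal. f_equal. lia.
Qed.

Section Sig.
Variable s : R -> R.
Hypothesis Hmono : forall x y, x <= y -> s x <= s y.
Hypothesis Hlim0 : is_lim s m_infty 0.
Hypothesis Hlim1 : is_lim s p_infty 1.
Hypothesis Hodd : Sigma1 s.
Hypothesis Hconc : forall x y t, 0 <= x -> 0 <= y -> 0 <= t <= 1 ->
     t * s x + (1 - t) * s y <= s (t * x + (1 - t) * y).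
Hypothesis Hs1 : s 1 < 1.

Lemma sig_opp x : s (- x) = 1 - s x.
Proof. pose proof (Hodd x). lra. Qed.

Lemma sig_ge0 x : 0 <= s x.
Proof.
  destruct (Rle_or_lt 0 (s x)) as [H|H]; auto.
  apply is_lim_spec in Hlim0. simpl in Hlim0.
  assert (He : 0 < - s x) by lra.
  destruct (Hlim0 (mkposreal _ He)) as [M HM]. simpl in HM.
  set (y := Rmin x (M - 1)).
  assert (y < M) by (unfold y; pose proof (Rmin_r x (M-1)); lra).
  specialize (HM y H0). assert (s y <= s x) by (apply Hmono; apply Rmin_l).
  rewrite Rminus_0_r in HM. apply Rabs_def2 in HM. lra.
Qed.

Lemma sig_le1 x : s x <= 1.
Proof. pose proof (sig_ge0 (-x)). rewrite sig_opp in H. lra. Qed.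

Lemma sig_0 : s 0 = / 2.
Proof. pose proof (sig_opp 0). rewrite Ropp_0 in H. lra. Qed.

Lemma sig_strict01 a b : 0 <= a -> a < b -> b <= 1 -> s a < s b.
Proof.
  intros Ha Hab Hb.
  destruct (Rle_or_lt (s b) (s a)) as [H|H]; auto.
  exfalso.
  assert (Heq : s a = s b) by (pose proof (Hmono a b); lra).
  assert (Hy : forall y, b < y -> s y <= s b).
  { intros y Hy.
    set (l := (y - b) / (y - a)).
    assert (Hl0 : 0 <= l <= 1).
    { unfold l. split. apply Rdiv_le_0_compat; lra.
      apply Rmult_le_reg_r with (y - a). lra. unfold Rdiv. rewrite Rmult_assoc, Rinv_l; lra. }
    assert (Hlx : l * a + (1 - l) * y = b).
    { unfold l. field. lra. }
    pose proof (Hconc a y l Ha ltac:(lra) Hl0). rewrite Hlx, Heq in H0.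
    assert (H1l : 0 < 1 - l).
    { unfold l. apply Rlt_Rminus. apply Rmult_lt_reg_r with (y - a). lra.
      unfold Rdiv. rewrite Rmult_assoc, Rinv_l; lra. }
    apply Rmult_le_reg_l with (1 - l); auto. lra. }
  apply is_lim_spec in Hlim1. simpl in Hlim1.
  assert (He : 0 < 1 - s 1) by lra.
  destruct (Hlim1 (mkposreal _ He)) as [M HM]. simpl in HM.
  set (y := Rmax M b + 1).
  assert (M < y) by (unfold y; pose proof (Rmax_l M b); lra).
  assert (b < y) by (unfold y; pose proof (Rmax_r M b); lra).
  specialize (HM y H0). apply Rabs_def2 in HM.
  pose proof (Hy y H1). pose proof (Hmono b 1 Hb). lra.
Qed.

Lemma sig_strict a b : a < b -> -1 < b -> a < 1 -> s a < s b.
Proof.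
  intros Hab Hb Ha.
  set (a' := Rmax a (-1)). set (b' := Rmin b 1).
  assert (s a <= s a') by (apply Hmono; apply Rmax_l).
  assert (s b' <= s b) by (apply Hmono; apply Rmin_l).
  assert (Ha' : -1 <= a' < 1) by (unfold a'; unfold Rmax; destruct Rle_dec; lra).
  assert (Hb' : -1 < b' <= 1) by (unfold b'; unfold Rmin; destruct Rle_dec; lra).
  assert (Hab' : a' < b') by (unfold a', b', Rmax, Rmin; destruct Rle_dec; destruct Rle_dec; lra).
  enough (s a' < s b') by lra.
  destruct (Rle_or_lt 0 a') as [Hz|Hz].
  - apply sig_strict01; lra.
  - destruct (Rle_or_lt b' 0) as [Hw|Hw].
    + rewrite <- (Ropp_involutive a'), <- (Ropp_involutive b'), (sig_opp (-a')), (sig_opp (-b')).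
      assert (0 <= -b') by lra. assert (-b' < -a') by lra. assert (-a' <= 1) by lra.
      pose proof (sig_strict01 (-b') (-a') H1 H2 H3). lra.
    + pose proof (sig_strict01 0 b' ltac:(lra) ltac:(lra) ltac:(lra)).
      pose proof (sig_strict01 0 (-a') ltac:(lra) ltac:(lra) ltac:(lra)).
      rewrite <- (Ropp_involutive a'), (sig_opp (-a')). pose proof sig_0. lra.
Qed.

End Sig.

Lemma Rfloor_spec z : IZR (Rfloor z) <= z < IZR (Rfloor z) + 1.
Proof.
  unfold Rfloor. rewrite minus_IZR. destruct (archimed z). simpl. lra.
Qed.

Lemma Rceil_spec z : z <= IZR (Rceil z) < z + 1.
Proof.
  unfold Rceil. rewrite opp_IZR. destruct (Rfloor_spec (- z)). lra.
Qed.

Definition Kl a n := Rceil (INR n * a).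
Definition Kr b n := Rfloor (INR n * b).
Definition LL a b n := Z.to_nat (Kr b n - Kl a n).
Definition Acell f n k := INR n * RInt f (IZR k / INR n) ((IZR k + 1) / INR n).
Definition kk a n i := (Kl a n + Z.of_nat i)%Z.
Definition Nsum s a b n f u :=
  ssum (fun i => Acell f n (kk a n i) * phi_sigma s (u - IZR (kk a n i))) (LL a b n).
Definition Dsum s a b n u :=
  ssum (fun i => phi_sigma s (u - IZR (kk a n i))) (LL a b n).
Definition GG s v := (s v + s (v - 1)) / 2.

Lemma Kant_eq s a b n f x :
  Kant s a b n f x = Nsum s a b n f (INR n * x) / Dsum s a b n (INR n * x).
Proof.
  unfold Kant, Kset, Nsum, Dsum. rewrite !sumZ_seq. reflexivity.
Qed.

Lemma IZR_kk a n i : IZR (kk a n i) = IZR (Kl a n) + INR i.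
Proof. unfold kk. rewrite plus_IZR, INR_IZR_INZ. reflexivity. Qed.

Lemma phi_GG s v : phi_sigma s v = GG s (v + 1) - GG s v.
Proof. unfold phi_sigma, GG. replace (v + 1 - 1) with v by ring. field. Qed.

Lemma Dsum_eq s a b n u :
  Dsum s a b n u = GG s (u - IZR (Kl a n) + 1) - GG s (u - IZR (Kl a n) - INR (LL a b n) + 1).
Proof.
  unfold Dsum.
  pose (F := fun j:nat => - GG s (u - IZR (Kl a n) - INR j + 1)).
  transitivity (ssum (fun i => F (S i) - F i) (LL a b n)).
  - apply ssum_ext. intros i _. unfold F. rewrite phi_GG, IZR_kk, S_INR.
    replace (u - (IZR (Kl a n) + INR i) + 1) with (u - IZR (Kl a n) - INR i + 1) by ring.
    replace (u - IZR (Kl a n) - (INR i + 1) + 1) with (u - (IZR (Kl a n) + INR i)) by ring. ring.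
  - rewrite ssum_telescope. unfold F. simpl.
    replace (u - IZR (Kl a n) - 0 + 1) with (u - IZR (Kl a n) + 1) by ring. ring.
Qed.

Lemma LL_spec a b n : (Kl a n <= Kr b n)%Z -> IZR (Kl a n) + INR (LL a b n) = IZR (Kr b n).
Proof.
  intros H. unfold LL. rewrite INR_IZR_INZ, Z2Nat.id by lia. rewrite minus_IZR. ring.
Qed.

Lemma Kl_Kr a b n : 3 <= INR n * (b - a) -> (Kl a n + 2 <= Kr b n)%Z.
Proof.
  intros H. unfold Kl, Kr.
  destruct (Rceil_spec (INR n * a)). destruct (Rfloor_spec (INR n * b)).
  assert (IZR (Rceil (INR n * a)) + 1 < IZR (Rfloor (INR n * b))) by nra.
  rewrite <- plus_IZR in H4. apply lt_IZR in H4. lia.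
Qed.

Section Pos.
Variable s : R -> R.
Hypothesis Hmono : forall x y, x <= y -> s x <= s y.
Hypothesis Hlim0 : is_lim s m_infty 0.
Hypothesis Hlim1 : is_lim s p_infty 1.
Hypothesis Hodd : Sigma1 s.
Hypothesis Hconc : forall x y t, 0 <= x -> 0 <= y -> 0 <= t <= 1 ->
     t * s x + (1 - t) * s y <= s (t * x + (1 - t) * y).
Hypothesis Hs1 : s 1 < 1.

Lemma Dsum_pos a b n u : 3 <= INR n * (b - a) -> INR n * a <= u <= INR n * b ->
  0 < Dsum s a b n u.
Proof.
  intros H Hu. pose proof (Kl_Kr a b n H).
  rewrite Dsum_eq.
  replace (u - IZR (Kl a n) - INR (LL a b n) + 1) with (u - IZR (Kr b n) + 1)
    by (rewrite <- (LL_spec a b n) by lia; ring).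
  unfold Kl, Kr in *.
  destruct (Rceil_spec (INR n * a)). destruct (Rfloor_spec (INR n * b)).
  set (K0 := Rceil (INR n * a)) in *. set (K1 := Rfloor (INR n * b)) in *.
  assert (IZR K0 + 2 <= IZR K1) by (rewrite <- (plus_IZR K0 2); apply IZR_le; lia).
  unfold GG.
  pose proof (Hmono (u - IZR K1 + 1) (u - IZR K0 + 1) ltac:(lra)).
  pose proof (sig_strict s Hmono Hlim1 Hodd Hconc Hs1 (u - IZR K1 + 1 - 1) (u - IZR K0 + 1 - 1)
     ltac:(lra) ltac:(lra) ltac:(lra)).
  lra.
Qed.

End Pos.

Lemma exists_nat_ge r : exists N : nat, forall n, (N <= n)%nat -> r <= INR n.
Proof.
  destruct (archimed r) as [H1 H2]. exists (Z.to_nat (up r)). intros n Hn.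
  apply le_INR in Hn. destruct (Z_le_gt_dec 0 (up r)).
  - rewrite INR_IZR_INZ, Z2Nat.id in Hn by lia. lra.
  - assert (IZR (up r) < 0) by (apply IZR_lt; lia). pose proof (pos_INR n). lra.
Qed.

Lemma cell_in a b n k : 0 < INR n -> (Kl a n <= k)%Z -> (k + 1 <= Kr b n)%Z ->
  a <= IZR k / INR n /\ (IZR k + 1) / INR n <= b.
Proof.
  intros Hn H1 H2. unfold Kl, Kr in *.
  destruct (Rceil_spec (INR n * a)). destruct (Rfloor_spec (INR n * b)).
  apply IZR_le in H1. apply IZR_le in H2. rewrite plus_IZR in H2.
  split.
  - apply Rmult_le_reg_l with (INR n); auto. field_simplify; lra.
  - apply Rmult_le_reg_l with (INR n); auto. field_simplify; lra.
Qed.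

Lemma cell_len n k : 0 < INR n -> INR n * ((IZR k + 1) / INR n - IZR k / INR n) = 1.
Proof. intros. field. lra. Qed.

Lemma RInt_const_R (u v c : R) : RInt (fun _ => c) u v = (v - u) * c.
Proof. rewrite RInt_const. reflexivity. Qed.

Lemma backward (s : R -> R) a b f c :
  (forall x y, x <= y -> s x <= s y) -> is_lim s m_infty 0 -> is_lim s p_infty 1 ->
  Sigma1 s ->
  (forall x y t, 0 <= x -> 0 <= y -> 0 <= t <= 1 ->
     t * s x + (1 - t) * s y <= s (t * x + (1 - t) * y)) -> s 1 < 1 ->
  a < b -> (forall x, a <= x <= b -> f x = c) ->
  forall eps, 0 < eps -> exists N : nat, forall n : nat, (N <= n)%nat ->
      forall x, a <= x <= b -> Rabs (Kant s a b n f x - f x) <= eps / INR n.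
Proof.
  intros Hmono Hlim0 Hlim1 Hodd Hconc Hs1 Hab Hf eps Heps.
  destruct (exists_nat_ge (3 / (b - a))) as [N HN].
  exists N. intros n Hn x Hx.
  specialize (HN n Hn).
  assert (H3 : 3 <= INR n * (b - a)).
  { apply Rmult_le_reg_r with (/ (b - a)). apply Rinv_0_lt_compat; lra.
    rewrite Rmult_assoc, Rinv_r by lra. unfold Rdiv in HN. lra. }
  assert (Hn0 : 0 < INR n) by (apply Rmult_lt_reg_r with (b - a); lra).
  pose proof (Kl_Kr a b n H3) as HK.
  assert (HD : 0 < Dsum s a b n (INR n * x)).
  { apply (Dsum_pos s Hmono Hlim1 Hodd Hconc Hs1); auto.
    split; apply Rmult_le_compat_l; lra. }
  rewrite Kant_eq.
  assert (HN' : Nsum s a b n f (INR n * x) = c * Dsum s a b n (INR n * x)).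
  { unfold Nsum, Dsum. rewrite <- ssum_scal. apply ssum_ext. intros i Hi.
    f_equal. unfold Acell.
    assert (Hk1 : (Kl a n <= kk a n i)%Z) by (unfold kk; lia).
    assert (Hk2 : (kk a n i + 1 <= Kr b n)%Z).
    { unfold kk, LL in *. lia. }
    destruct (cell_in a b n _ Hn0 Hk1 Hk2).
    rewrite (RInt_ext _ (fun _ => c)).
    - rewrite RInt_const_R. rewrite <- Rmult_assoc, cell_len; auto. ring.
    - intros t Ht. assert (IZR (kk a n i) / INR n <= (IZR (kk a n i) + 1) / INR n).
      { apply Rmult_le_reg_l with (INR n); auto; field_simplify; lra. }
      rewrite Rmin_left in Ht by lra. rewrite Rmax_right in Ht by lra.
      apply Hf. lra. }
  rewrite HN', Hf by auto. unfold Rdiv. rewrite Rmult_assoc, Rinv_r by lra.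
  rewrite Rmult_1_r, Rminus_diag, Rabs_R0.
  apply Rmult_le_pos; [lra | apply Rlt_le, Rinv_0_lt_compat; auto].
Qed.

Lemma decay_bound (s : R -> R) alpha :
  (forall x, s x <= 1) -> 2 < alpha -> Sigma3_with s alpha ->
  exists C2, 0 < C2 /\ forall x, x <= -1 -> s x <= C2 / (x * x).
Proof.
  intros Hle1 Ha [C [X [HX HC]]].
  set (M := Rmax X 1).
  assert (HM1 : 1 <= M) by apply Rmax_r.
  assert (HMX : X <= M) by apply Rmax_l.
  exists (Rabs C + M * M). split. pose proof (Rabs_pos C). nra.
  intros x Hx.
  assert (Hxx : 0 < x * x) by nra.
  destruct (Rle_or_lt x (- M)) as [H|H].
  - specialize (HC x ltac:(lra)).
    assert (Hax : Rabs x = - x) by (apply Rabs_left; lra).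
    assert (Hp : Rpower (Rabs x) (-1 - alpha) <= / (x * x)).
    { apply Rle_trans with (Rpower (Rabs x) (- INR 2)).
      apply Rle_Rpower. rewrite Hax; lra. simpl; lra.
      rewrite Rpower_Ropp, Rpower_pow by (rewrite Hax; lra). simpl.
      rewrite Rmult_1_r. replace (Rabs x * Rabs x) with (x * x). lra.
      rewrite Hax; ring. }
    assert (0 < Rpower (Rabs x) (-1 - alpha)) by (unfold Rpower; apply exp_pos).
    apply Rle_trans with (Rabs C * / (x * x)).
    + apply Rle_trans with (Rabs (s x)). apply Rle_abs.
      apply Rle_trans with (1 := HC).
      apply Rle_trans with (Rabs C * Rpower (Rabs x) (-1 - alpha)).
      apply Rmult_le_compat_r. lra. apply Rle_abs.
      apply Rmult_le_compat_l; auto. apply Rabs_pos.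
    + unfold Rdiv. apply Rmult_le_compat_r. left; apply Rinv_0_lt_compat; auto.
      pose proof (Rabs_pos C). nra.
  - apply Rle_trans with 1. auto.
    apply Rmult_le_reg_r with (x * x); auto. unfold Rdiv.
    rewrite Rmult_assoc, Rinv_l by lra. pose proof (Rabs_pos C). nra.
Qed.

Section Tails.
Variable s : R -> R.
Hypothesis Hmono : forall x y, x <= y -> s x <= s y.
Hypothesis Hge0 : forall x, 0 <= s x.
Hypothesis Hle1 : forall x, s x <= 1.
Variable C2 : R.
Hypothesis HC2 : 0 < C2.
Hypothesis Hdec : forall x, x <= -1 -> s x <= C2 / (x * x).

Definition rho (m : nat) := s (1 - INR m).

Lemma rho_tail_aux p J : (3 <= p)%nat ->
  ssum (fun l => rho (p + l)) J <= C2 * (/ (INR p - 2) - / (INR p + INR J - 2)).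
Proof.
  intros Hp. assert (Hp' : 3 <= INR p) by (replace 3 with (INR 3) by (simpl; lra); apply le_INR; auto).
  induction J.
  - simpl. rewrite Rplus_0_r. lra.
  - simpl ssum. rewrite S_INR.
    unfold rho. rewrite plus_INR.
    pose proof (pos_INR J).
    assert (H1 : s (1 - (INR p + INR J)) <= C2 / ((INR p + INR J - 1) * (INR p + INR J - 1))).
    { replace ((INR p + INR J - 1) * (INR p + INR J - 1)) with
        ((1 - (INR p + INR J)) * (1 - (INR p + INR J))) by ring. apply Hdec. lra. }
    assert (H2 : C2 / ((INR p + INR J - 1) * (INR p + INR J - 1)) <=
       C2 * (/ (INR p + INR J - 2) - / (INR p + (INR J + 1) - 2))).
    { unfold Rdiv. apply Rmult_le_compat_l. lra.
      replace (/ (INR p + INR J - 2) - / (INR p + (INR J + 1) - 2)) with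
        (/ ((INR p + INR J - 2) * (INR p + INR J - 1))) by (field; lra).
      apply Rinv_le_contravar. nra. nra. }
    unfold rho in IHJ. lra.
Qed.

Lemma rho_tail p J : (3 <= p)%nat -> ssum (fun l => rho (p + l)) J <= C2 / (INR p - 2).
Proof.
  intros Hp. pose proof (rho_tail_aux p J Hp).
  assert (Hp' : 3 <= INR p) by (replace 3 with (INR 3) by (simpl; lra); apply le_INR; auto).
  pose proof (pos_INR J).
  assert (0 <= / (INR p + INR J - 2)) by (left; apply Rinv_0_lt_compat; lra).
  unfold Rdiv. nra.
Qed.

Lemma rho_nonneg m : 0 <= rho m.
Proof. apply Hge0. Qed.

Lemma rho_total M : ssum rho M <= 3 + C2.
Proof.
  apply Rle_trans with (ssum rho (M + 3)).
  - rewrite ssum_add. pose proof (ssum_nonneg (fun i => rho (M + i)) 3 (fun i _ => rho_nonneg _)). lra.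
  - rewrite Nat.add_comm, ssum_add. pose proof (rho_tail 3 M (le_n _)).
    simpl in H. replace (1 + 1 + 1 - 2) with 1 in H by ring. rewrite Rdiv_1_r in H.
    simpl ssum. unfold rho at 1 2 3. pose proof (Hle1 (1 - INR 0)). pose proof (Hle1 (1 - INR 1)).
    pose proof (Hle1 (1 - INR 2)). lra.
Qed.

Lemma weighted_bound (g w : nat -> R) M M0 eta B :
  (3 <= M0)%nat -> (M0 <= M)%nat -> (forall m, 0 <= w m <= rho m) ->
  (forall m, (m < M0)%nat -> Rabs (g m) <= eta) ->
  (forall m, (m < M)%nat -> Rabs (g m) <= B) ->
  Rabs (ssum (fun m => g m * w m) M) <= eta * (3 + C2) + B * (C2 / (INR M0 - 2)).
Proof.
  intros H3 HM Hw Hg1 Hg2.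
  replace M with (M0 + (M - M0))%nat by lia. rewrite ssum_add.
  eapply Rle_trans. apply Rabs_triang. apply Rplus_le_compat.
  - eapply Rle_trans. apply ssum_abs.
    apply Rle_trans with (ssum (fun m => eta * rho m) M0).
    + apply ssum_le. intros i Hi. rewrite Rabs_mult. specialize (Hw i).
      rewrite (Rabs_right (w i)) by lra. apply Rmult_le_compat; auto. apply Rabs_pos. lra. lra.
    + rewrite ssum_scal. assert (0 <= eta).
      { specialize (Hg1 O ltac:(lia)). pose proof (Rabs_pos (g O)). lra. }
      apply Rmult_le_compat_l; auto. apply rho_total.
  - eapply Rle_trans. apply ssum_abs.
    apply Rle_trans with (ssum (fun m => B * rho (M0 + m)) (M - M0)).
    + apply ssum_le. intros i Hi. rewrite Rabs_mult. specialize (Hw (M0 + i)%nat).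
      rewrite (Rabs_right (w _)) by lra. apply Rmult_le_compat; auto. apply Rabs_pos. lra.
      apply Hg2. lia. lra.
    + rewrite ssum_scal. assert (0 <= B).
      { specialize (Hg2 O ltac:(lia)). pose proof (Rabs_pos (g O)). lra. }
      apply Rmult_le_compat_l; auto. apply rho_tail; auto.
Qed.

Lemma partial_diff (w : nat -> R) M1 M2 M0 :
  (3 <= M0)%nat -> (M0 <= M1)%nat -> (M0 <= M2)%nat -> (forall m, 0 <= w m <= rho m) ->
  Rabs (ssum w M1 - ssum w M2) <= C2 / (INR M0 - 2).
Proof.
  intros H3 H1 H2 Hw.
  assert (Hgen : forall A B, (M0 <= A)%nat -> (A <= B)%nat ->
     0 <= ssum w B - ssum w A <= C2 / (INR M0 - 2)).
  { intros A B HA HB. replace B with (A + (B - A))%nat by lia. rewrite ssum_add.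
    split. pose proof (ssum_nonneg (fun i => w (A + i)%nat) (B - A) (fun i _ => proj1 (Hw _))). lra.
    apply Rle_trans with (ssum (fun i => rho (M0 + ((A - M0) + i))) (B - A)).
    - replace (ssum w A + ssum (fun i => w (A + i)%nat) (B - A) - ssum w A)
        with (ssum (fun i => w (A + i)%nat) (B - A)) by ring.
      apply ssum_le. intros i _. replace (M0 + (A - M0 + i))%nat with (A + i)%nat by lia. apply Hw.
    - replace (ssum (fun i => rho (M0 + (A - M0 + i))) (B - A)) with
        (ssum (fun i => rho (M0 + i)) (A - M0 + (B - A)) - ssum (fun i => rho (M0 + i)) (A - M0))
        by (rewrite ssum_add; ring).
      pose proof (ssum_nonneg (fun i => rho (M0 + i)) (A - M0) (fun i _ => rho_nonneg _)).
      pose proof (rho_tail M0 (A - M0 + (B - A)) H3). lra. }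
  destruct (Nat.le_ge_cases M1 M2) as [H|H].
  - destruct (Hgen M1 M2 H1 H). rewrite Rabs_minus_sym, Rabs_right; lra.
  - destruct (Hgen M2 M1 H2 H). rewrite Rabs_right; lra.
Qed.

End Tails.

Definition Endf s a b n f th P :=
  ssum (fun i => Acell f n (kk a n i) * GG s (IZR P + th - IZR (kk a n i))) (LL a b n)
  - ssum (fun i => Acell f n (kk a n i)) (Z.to_nat (P - Kl a n)).

Lemma ssum_opp (h : nat -> R) M : ssum (fun i => - h i) M = - ssum h M.
Proof. induction M; simpl; lra. Qed.

Lemma sum_identity s a b n f th P Q : (Kl a n <= P)%Z -> (P <= Q)%Z ->
  ssum (fun l => Nsum s a b n f (IZR P + INR l + th)) (Z.to_nat (Q - P)) =
  Endf s a b n f th Q - Endf s a b n f th P + ssum (fun l => Acell f n (P + Z.of_nat l)) (Z.to_nat (Q - P)).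
Proof.
  intros H1 H2. unfold Nsum, Endf.
  rewrite ssum_swap.
  assert (HA : ssum (fun i => Acell f n (kk a n i)) (Z.to_nat (Q - Kl a n)) -
               ssum (fun i => Acell f n (kk a n i)) (Z.to_nat (P - Kl a n)) =
               ssum (fun l => Acell f n (P + Z.of_nat l)) (Z.to_nat (Q - P))).
  { replace (Z.to_nat (Q - Kl a n)) with (Z.to_nat (P - Kl a n) + Z.to_nat (Q - P))%nat by lia.
    rewrite ssum_add. ring_simplify. apply ssum_ext. intros i _. f_equal. unfold kk. lia. }
  rewrite <- HA.
  assert (HB : ssum (fun i => ssum (fun l => Acell f n (kk a n i) * phi_sigma s (IZR P + INR l + th - IZR (kk a n i))) (Z.to_nat (Q - P))) (LL a b n)
    = ssum (fun i => Acell f n (kk a n i) * GG s (IZR Q + th - IZR (kk a n i))) (LL a b n)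
      - ssum (fun i => Acell f n (kk a n i) * GG s (IZR P + th - IZR (kk a n i))) (LL a b n)).
  { rewrite <- ssum_minus. apply ssum_ext. intros i _. rewrite ssum_scal.
    rewrite <- Rmult_minus_distr_l. f_equal.
    pose (F := fun l : nat => GG s (IZR P + INR l + th - IZR (kk a n i))).
    transitivity (ssum (fun l => F (S l) - F l) (Z.to_nat (Q - P))).
    - apply ssum_ext. intros l _. unfold F. rewrite phi_GG, S_INR. f_equal; f_equal; ring.
    - rewrite ssum_telescope. unfold F. rewrite INR_IZR_INZ, Z2Nat.id by lia. simpl.
      rewrite minus_IZR. f_equal; f_equal; ring. }
  rewrite HB. ring.
Qed.

Lemma End_form s a b n f th P : (Kl a n <= P)%Z -> (P <= Kr b n)%Z ->
  Endf s a b n f th P =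
  ssum (fun m => Acell f n (P + Z.of_nat m) * GG s (th - INR m)) (LL a b n - Z.to_nat (P - Kl a n))
  - ssum (fun m => Acell f n (P - 1 - Z.of_nat m) * (1 - GG s (INR m + 1 + th))) (Z.to_nat (P - Kl a n)).
Proof.
  intros H1 H2. unfold Endf.
  set (p := Z.to_nat (P - Kl a n)).
  assert (Hp : (p <= LL a b n)%nat) by (unfold p, LL; lia).
  assert (E : ssum (fun i => Acell f n (kk a n i) * GG s (IZR P + th - IZR (kk a n i))) (LL a b n) =
     ssum (fun i => Acell f n (kk a n i) * GG s (IZR P + th - IZR (kk a n i))) (p + (LL a b n - p)))
    by (f_equal; lia).
  rewrite E, ssum_add. clear E.
  assert (A1 : ssum (fun i => Acell f n (kk a n i) * GG s (IZR P + th - IZR (kk a n i))) p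
     - ssum (fun i => Acell f n (kk a n i)) p =
     - ssum (fun m => Acell f n (P - 1 - Z.of_nat m) * (1 - GG s (INR m + 1 + th))) p).
  { rewrite <- ssum_minus, <- ssum_opp. rewrite ssum_rev. apply ssum_ext. intros m Hm.
    assert (Hk : kk a n (p - 1 - m) = (P - 1 - Z.of_nat m)%Z) by (unfold kk, p in *; lia).
    rewrite Hk. rewrite !minus_IZR, <- INR_IZR_INZ.
    replace (IZR P + th - (IZR P - 1 - INR m)) with (INR m + 1 + th) by ring. ring. }
  assert (A2 : ssum (fun i => Acell f n (kk a n (p + i)) * GG s (IZR P + th - IZR (kk a n (p + i)))) (LL a b n - p)
     = ssum (fun m => Acell f n (P + Z.of_nat m) * GG s (th - INR m)) (LL a b n - p)).
  { apply ssum_ext. intros m Hm.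
    assert (Hk : kk a n (p + m) = (P + Z.of_nat m)%Z) by (unfold kk, p in *; lia).
    rewrite Hk, plus_IZR, <- INR_IZR_INZ. f_equal. f_equal. ring. }
  rewrite A2. lra.
Qed.

Section F.
Variables (a b : R) (f : R -> R).
Hypothesis Hab : a < b.
Hypothesis Hc : continuous_on_ab f a b.

Definition clampf t := f (Rmax a (Rmin b t)).

Lemma clamp_in t : a <= Rmax a (Rmin b t) <= b.
Proof. unfold Rmax, Rmin. repeat destruct Rle_dec; lra. Qed.

Lemma clamp_lip t u : Rabs (Rmax a (Rmin b t) - Rmax a (Rmin b u)) <= Rabs (t - u).
Proof. unfold Rmax, Rmin. repeat destruct Rle_dec; unfold Rabs; repeat destruct Rcase_abs; lra. Qed.

Lemma clamp_id t : a <= t <= b -> Rmax a (Rmin b t) = t.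
Proof. intros. unfold Rmax, Rmin. repeat destruct Rle_dec; lra. Qed.

Lemma clampf_cont z : continuity_pt clampf z.
Proof.
  unfold continuity_pt, continue_in, limit1_in, limit_in. simpl. unfold R_dist.
  intros eps Heps.
  destruct (Hc _ (clamp_in z) eps Heps) as [d [Hd Hd']].
  exists d. split; auto. intros x [_ Hx]. unfold clampf.
  apply Hd'. apply clamp_in. eapply Rle_lt_trans. apply clamp_lip. auto.
Qed.

Lemma f_bounded : exists B, 0 <= B /\ forall t, a <= t <= b -> Rabs (f t) <= B.
Proof.
  destruct (continuity_ab_maj clampf a b (Rlt_le _ _ Hab) (fun c _ => clampf_cont c)) as [M [HM _]].
  destruct (continuity_ab_min clampf a b (Rlt_le _ _ Hab) (fun c _ => clampf_cont c)) as [m [Hm _]].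
  exists (Rabs (clampf M) + Rabs (clampf m)). split.
  pose proof (Rabs_pos (clampf M)); pose proof (Rabs_pos (clampf m)); lra.
  intros t Ht. specialize (HM t Ht). specialize (Hm t Ht). unfold clampf in *.
  rewrite (clamp_id t Ht) in HM, Hm.
  pose proof (Rle_abs (f (Rmax a (Rmin b M)))). pose proof (Rle_abs (- f (Rmax a (Rmin b m)))).
  rewrite Rabs_Ropp in H0. pose proof (Rabs_pos (f (Rmax a (Rmin b M)))). pose proof (Rabs_pos (f (Rmax a (Rmin b m)))).
  unfold Rabs at 1. destruct Rcase_abs; lra.
Qed.

Lemma ex_RInt_f u v : a <= u -> u <= v -> v <= b -> ex_RInt f u v.
Proof.
  intros H1 H2 H3. apply ex_RInt_ext with clampf.
  - intros x Hx. rewrite Rmin_left in Hx by auto. rewrite Rmax_right in Hx by auto.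
    unfold clampf. rewrite clamp_id; auto. lra.
  - apply (@ex_RInt_continuous R_CompleteNormedModule). intros z _. apply continuity_pt_filterlim. apply clampf_cont.
Qed.

Lemma cell_approx n k v eta : 0 < INR n -> a <= IZR k / INR n -> (IZR k + 1) / INR n <= b ->
  (forall t, IZR k / INR n <= t <= (IZR k + 1) / INR n -> Rabs (f t - v) <= eta) ->
  Rabs (Acell f n k - v) <= eta.
Proof.
  intros Hn H1 H2 Hf.
  set (u := IZR k / INR n) in *. set (w := (IZR k + 1) / INR n) in *.
  assert (Huw : u <= w) by (unfold u, w; apply Rmult_le_reg_l with (INR n); auto; field_simplify; lra).
  assert (Hex : ex_RInt f u w) by (apply ex_RInt_f; lra).
  assert (HR : RInt (fun t => f t - v) u w = RInt f u w - RInt (fun _ => v) u w).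
  { exact (RInt_minus f (fun _ => v) u w Hex (ex_RInt_const u w v)). }
  rewrite RInt_const_R in HR.
  assert (Hb : Rabs (RInt (fun t => f t - v) u w) <= (w - u) * eta).
  { apply abs_RInt_le_const; auto.
    apply (ex_RInt_minus f (fun _ => v)); auto. apply ex_RInt_const. }
  assert (Hl : INR n * (w - u) = 1) by (unfold u, w; apply cell_len; auto).
  unfold Acell. fold u w.
  replace (INR n * RInt f u w - v) with (INR n * RInt (fun t => f t - v) u w)
    by (rewrite HR; rewrite Rmult_minus_distr_l, <- Rmult_assoc, Hl; ring).
  rewrite Rabs_mult, Rabs_right by lra.
  apply Rle_trans with (INR n * ((w - u) * eta)). apply Rmult_le_compat_l; lra.
  rewrite <- Rmult_assoc, Hl. lra.
Qed.

End F.

Lemma near_cell n k x c t : 0 < INR n -> INR n * x - c <= IZR k -> IZR k + 1 <= INR n * x + c ->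
  IZR k / INR n <= t <= (IZR k + 1) / INR n -> Rabs (t - x) <= c / INR n.
Proof.
  intros Hn H1 H2 [H3 H4].
  assert (IZR k <= INR n * t).
  { apply Rle_trans with (INR n * (IZR k / INR n)). right; field; lra. apply Rmult_le_compat_l; lra. }
  assert (INR n * t <= IZR k + 1).
  { apply Rle_trans with (INR n * ((IZR k + 1) / INR n)). apply Rmult_le_compat_l; lra. right; field; lra. }
  replace (t - x) with ((INR n * t - INR n * x) / INR n) by (field; lra).
  unfold Rdiv. rewrite Rabs_mult, (Rabs_right (/ INR n)) by (left; apply Rinv_0_lt_compat; auto).
  apply Rmult_le_compat_r. left; apply Rinv_0_lt_compat; auto.
  apply Rabs_le. lra.
Qed.

Section Prep.
Variables (a b : R) (f : R -> R).
Hypothesis Hab : a < b.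
Hypothesis Hc : continuous_on_ab f a b.
Variable B : R.
Hypothesis HB : forall t, a <= t <= b -> Rabs (f t) <= B.

Lemma prep x eta M0 : a < x < b -> 0 < eta ->
  exists R0, forall n : nat, R0 <= INR n -> forall P : Z, Rabs (IZR P - INR n * x) <= 2 ->
   0 < INR n /\ (Kl a n <= P)%Z /\ (P <= Kr b n)%Z /\
   (M0 <= Z.to_nat (P - Kl a n))%nat /\ (S M0 <= LL a b n - Z.to_nat (P - Kl a n))%nat /\
   (forall m, (m < M0)%nat -> Rabs (Acell f n (P + Z.of_nat m) - f x) <= eta /\
                              Rabs (Acell f n (P - 1 - Z.of_nat m) - f x) <= eta) /\
   (forall m, (m < LL a b n - Z.to_nat (P - Kl a n))%nat -> Rabs (Acell f n (P + Z.of_nat m) - f x) <= 2 * B) /\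
   (forall m, (m < Z.to_nat (P - Kl a n))%nat -> Rabs (Acell f n (P - 1 - Z.of_nat m) - f x) <= 2 * B).
Proof.
  intros Hx Heta.
  destruct (Hc x ltac:(lra) eta Heta) as [d [Hd Hd']].
  set (e := Rmin (Rmin (x - a) (b - x)) d).
  assert (He : 0 < e) by (unfold e; repeat apply Rmin_glb_lt; lra).
  assert (He1 : e <= x - a) by (unfold e; eapply Rle_trans; [apply Rmin_l|apply Rmin_l]).
  assert (He2 : e <= b - x) by (unfold e; eapply Rle_trans; [apply Rmin_l|apply Rmin_r]).
  assert (He3 : e <= d) by (unfold e; apply Rmin_r).
  exists ((INR M0 + 6) / e). intros n Hn P HP.
  pose proof (pos_INR M0).
  assert (Hn0 : 0 < INR n).
  { apply Rlt_le_trans with ((INR M0 + 6) / e); auto. apply Rdiv_lt_0_compat; lra. }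
  assert (Hne : INR M0 + 6 <= INR n * e).
  { apply Rmult_le_reg_r with (/ e). apply Rinv_0_lt_compat; auto.
    rewrite Rmult_assoc, Rinv_r, Rmult_1_r by lra. auto. }
  assert (Hnd1 : INR M0 + 6 <= INR n * (x - a)) by nra.
  assert (Hnd2 : INR M0 + 6 <= INR n * (b - x)) by nra.
  assert (Hnd3 : INR M0 + 6 <= INR n * d) by nra.
  assert (HPx : INR n * x - 2 <= IZR P <= INR n * x + 2) by (apply Rabs_le_between in HP; lra).
  pose proof (Rceil_spec (INR n * a)) as HK0. pose proof (Rfloor_spec (INR n * b)) as HK1.
  fold (Kl a n) in HK0. fold (Kr b n) in HK1.
  assert (Hp1 : IZR (Kl a n) + INR M0 + 2 < IZR P) by nra.
  assert (Hp2 : IZR P + INR M0 + 2 < IZR (Kr b n)) by nra.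
  rewrite INR_IZR_INZ in Hp1, Hp2, H. rewrite <- !plus_IZR in Hp1, Hp2. apply lt_IZR in Hp1, Hp2.
  assert (HLL : LL a b n = Z.to_nat (Kr b n - Kl a n)) by reflexivity.
  assert (Hcell : forall k, (Kl a n <= k)%Z -> (k + 1 <= Kr b n)%Z ->
     Rabs (Acell f n k - f x) <= 2 * B).
  { intros k Hk1 Hk2. destruct (cell_in a b n k Hn0 Hk1 Hk2).
    pose proof (HB x ltac:(lra)).
    assert (Rabs (Acell f n k - 0) <= B).
    { apply (cell_approx a b f Hab Hc); auto. intros t Ht. rewrite Rminus_0_r. apply HB.
      split; lra. }
    rewrite Rminus_0_r in H3.
    eapply Rle_trans. apply Rabs_triang. rewrite Rabs_Ropp. lra. }
  assert (Hclose : forall k, (Kl a n <= k)%Z -> (k + 1 <= Kr b n)%Z ->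
     INR n * x - (INR M0 + 3) <= IZR k -> IZR k + 1 <= INR n * x + (INR M0 + 3) ->
     Rabs (Acell f n k - f x) <= eta).
  { intros k Hk1 Hk2 Hk3 Hk4. destruct (cell_in a b n k Hn0 Hk1 Hk2).
    apply (cell_approx a b f Hab Hc); auto. intros t Ht. left. apply Hd'. split; lra.
    eapply Rle_lt_trans. apply (near_cell n k x (INR M0 + 3) t); auto.
    apply Rmult_lt_reg_l with (INR n); auto. field_simplify; lra. }
  split; [auto|]. split; [lia|]. split; [lia|]. split; [lia|]. split; [lia|].
  split; [|split].
  - intros m Hm. pose proof Hm as Hm'. apply lt_INR in Hm'. pose proof (pos_INR m). split.
    + apply Hclose; [lia|lia| |]; rewrite plus_IZR, <- INR_IZR_INZ; lra.
    + apply Hclose; [lia|lia| |]; rewrite !minus_IZR, <- INR_IZR_INZ; lra.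
  - intros m Hm. apply Hcell; lia.
  - intros m Hm. apply Hcell; lia.
Qed.

End Prep.

Lemma ssum_center (g w : nat -> R) c M :
  ssum (fun m => g m * w m) M = ssum (fun m => (g m - c) * w m) M + c * ssum w M.
Proof. induction M; simpl. ring. rewrite IHM. ring. Qed.

Section Ends.
Variable s : R -> R.
Hypothesis Hmono : forall x y, x <= y -> s x <= s y.
Hypothesis Hge0 : forall x, 0 <= s x.
Hypothesis Hle1 : forall x, s x <= 1.
Hypothesis Hopp : forall x, s (- x) = 1 - s x.
Variable C2 : R.
Hypothesis HC2 : 0 < C2.
Hypothesis Hdec : forall x, x <= -1 -> s x <= C2 / (x * x).
Variables (a b : R) (f : R -> R).
Hypothesis Hab : a < b.
Hypothesis Hc : continuous_on_ab f a b.
Variable B : R.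
Hypothesis HB0 : 0 <= B.
Hypothesis HB : forall t, a <= t <= b -> Rabs (f t) <= B.

Definition b0 m := GG s (0 - INR m).
Definition bh m := GG s (/ 2 - INR m).

Lemma b0_bound m : 0 <= b0 m <= rho s m.
Proof.
  unfold b0, GG, rho. pose proof (Hge0 (0 - INR m)). pose proof (Hge0 (0 - INR m - 1)).
  pose proof (Hmono (0 - INR m - 1) (0 - INR m) ltac:(lra)).
  pose proof (Hmono (0 - INR m) (1 - INR m) ltac:(lra)). lra.
Qed.

Lemma bh_bound m : 0 <= bh m <= rho s m.
Proof.
  unfold bh, GG, rho. pose proof (Hge0 (/2 - INR m)). pose proof (Hge0 (/2 - INR m - 1)).
  pose proof (Hmono (/2 - INR m - 1) (/2 - INR m) ltac:(lra)).
  pose proof (Hmono (/2 - INR m) (1 - INR m) ltac:(lra)). lra.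
Qed.

Lemma bhS_bound m : 0 <= bh (S m) <= rho s m.
Proof.
  pose proof (bh_bound (S m)). unfold bh, GG, rho in *. rewrite S_INR in *.
  pose proof (Hmono (/2 - (INR m + 1)) (1 - INR m) ltac:(lra)). 
  pose proof (Hmono (/2 - (INR m + 1) - 1) (/2 - (INR m + 1)) ltac:(lra)). lra.
Qed.

Lemma b0_eq m : 1 - GG s (INR m + 1 + 0) = b0 m.
Proof.
  unfold b0, GG. replace (0 - INR m - 1) with (- (INR m + 1)) by ring.
  replace (0 - INR m) with (- INR m) by ring.
  rewrite !Hopp. replace (INR m + 1 + 0 - 1) with (INR m) by ring. rewrite ?Rplus_0_r. lra.
Qed.

Lemma bh_eq m : 1 - GG s (INR m + 1 + / 2) = bh (S m).
Proof.
  unfold bh, GG. rewrite S_INR.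
  replace (/ 2 - (INR m + 1) - 1) with (- (INR m + 1 + / 2)) by field.
  replace (/ 2 - (INR m + 1)) with (- (INR m + 1 + / 2 - 1)) by field.
  rewrite !Hopp. lra.
Qed.

Lemma bh0 : bh O = / 2.
Proof.
  unfold bh, GG. simpl. replace (/ 2 - 0 - 1) with (- (/ 2 - 0)) by field.
  rewrite Hopp. lra.
Qed.

Lemma choose_M0 tau : 0 < tau -> exists M0 : nat, (3 <= M0)%nat /\ 5 * B * (C2 / (INR M0 - 2)) <= tau / 2.
Proof.
  intros Ht. destruct (exists_nat_ge (10 * B * C2 / tau)) as [N HN].
  exists (N + 3)%nat. split. lia.
  specialize (HN N (le_n _)). rewrite plus_INR in *. simpl (INR 3).
  assert (0 <= 10 * B * C2 / tau) by (apply Rdiv_le_0_compat; [apply Rmult_le_pos; [lra|lra] | lra]).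
  assert (HP : 0 < INR N + (1 + 1 + 1) - 2) by lra.
  set (D := INR N + (1 + 1 + 1) - 2) in *.
  replace (5 * B * (C2 / D)) with ((5 * B * C2) / D) by (field; lra).
  apply Rmult_le_reg_r with D; auto.
  replace ((5 * B * C2) / D * D) with (5 * B * C2) by (field; lra).
  assert (10 * B * C2 <= tau * INR N).
  { apply Rmult_le_reg_r with (/ tau). apply Rinv_0_lt_compat; auto.
    replace (tau * INR N * / tau) with (INR N) by (field; lra). auto. }
  unfold D. nra.
Qed.

Lemma End0_lim x tau : a < x < b -> 0 < tau ->
  exists R0, forall n : nat, R0 <= INR n -> forall P : Z, Rabs (IZR P - INR n * x) <= 2 ->
    Rabs (Endf s a b n f 0 P) <= tau.
Proof.
  intros Hx Ht.
  destruct (choose_M0 tau Ht) as [M0 [HM0 HM0']].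
  set (eta := tau / (4 * (3 + C2))).
  assert (Heta : 0 < eta) by (unfold eta; apply Rdiv_lt_0_compat; lra).
  destruct (prep a b f Hab Hc B HB x eta M0 Hx Heta) as [R0 HR0].
  exists R0. intros n Hn P HP.
  destruct (HR0 n Hn P HP) as [Hn0 [HP1 [HP2 [Hp [HMR [Hnear [Hfar1 Hfar2]]]]]]].
  rewrite End_form by auto.
  set (p := Z.to_nat (P - Kl a n)) in *. set (MR := (LL a b n - p)%nat) in *.
  rewrite (ssum_ext (fun m => Acell f n (P + Z.of_nat m) * GG s (0 - INR m))
                    (fun m => Acell f n (P + Z.of_nat m) * b0 m)) by reflexivity.
  rewrite (ssum_ext (fun m => Acell f n (P - 1 - Z.of_nat m) * (1 - GG s (INR m + 1 + 0)))
                    (fun m => Acell f n (P - 1 - Z.of_nat m) * b0 m)) by (intros; rewrite b0_eq; auto).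
  rewrite (ssum_center _ _ (f x) MR), (ssum_center _ _ (f x) p).
  pose proof (weighted_bound s Hge0 Hle1 C2 HC2 Hdec (fun m => Acell f n (P + Z.of_nat m) - f x) b0 MR M0 eta (2 * B)
     HM0 ltac:(lia) b0_bound (fun m Hm => proj1 (Hnear m Hm)) Hfar1) as W1.
  pose proof (weighted_bound s Hge0 Hle1 C2 HC2 Hdec (fun m => Acell f n (P - 1 - Z.of_nat m) - f x) b0 p M0 eta (2 * B)
     HM0 Hp b0_bound (fun m Hm => proj2 (Hnear m Hm)) Hfar2) as W2.
  pose proof (partial_diff s Hge0 C2 HC2 Hdec b0 MR p M0 HM0 ltac:(lia) Hp b0_bound) as W3.
  pose proof (HB x ltac:(lra)) as Hfx.
  set (S1 := ssum (fun m => (Acell f n (P + Z.of_nat m) - f x) * b0 m) MR) in *.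
  set (S2 := ssum (fun m => (Acell f n (P - 1 - Z.of_nat m) - f x) * b0 m) p) in *.
  set (T1 := ssum b0 MR) in *. set (T2 := ssum b0 p) in *.
  replace (S1 + f x * T1 - (S2 + f x * T2)) with (S1 - S2 + f x * (T1 - T2)) by ring.
  eapply Rle_trans. apply Rabs_triang. eapply Rle_trans. apply Rplus_le_compat_r. apply Rabs_triang.
  rewrite Rabs_Ropp, Rabs_mult.
  assert (Rabs (f x) * Rabs (T1 - T2) <= B * (C2 / (INR M0 - 2))).
  { apply Rmult_le_compat; auto; apply Rabs_pos. }
  assert (eta * (3 + C2) = tau / 4) by (unfold eta; field; lra).
  lra.
Qed.

Lemma EndH_lim x tau : a < x < b -> 0 < tau ->
  exists R0, forall n : nat, R0 <= INR n -> forall P : Z, Rabs (IZR P - INR n * x) <= 2 ->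
    Rabs (Endf s a b n f (/ 2) P - f x / 2) <= tau.
Proof.
  intros Hx Ht.
  destruct (choose_M0 tau Ht) as [M0 [HM0 HM0']].
  set (eta := tau / (4 * (3 + C2))).
  assert (Heta : 0 < eta) by (unfold eta; apply Rdiv_lt_0_compat; lra).
  destruct (prep a b f Hab Hc B HB x eta M0 Hx Heta) as [R0 HR0].
  exists R0. intros n Hn P HP.
  destruct (HR0 n Hn P HP) as [Hn0 [HP1 [HP2 [Hp [HMR [Hnear [Hfar1 Hfar2]]]]]]].
  rewrite End_form by auto.
  set (p := Z.to_nat (P - Kl a n)) in *. set (MR := (LL a b n - p)%nat) in *.
  rewrite (ssum_ext (fun m => Acell f n (P + Z.of_nat m) * GG s (/ 2 - INR m))
                    (fun m => Acell f n (P + Z.of_nat m) * bh m)) by reflexivity.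
  rewrite (ssum_ext (fun m => Acell f n (P - 1 - Z.of_nat m) * (1 - GG s (INR m + 1 + / 2)))
                    (fun m => Acell f n (P - 1 - Z.of_nat m) * bh (S m))) by (intros; rewrite bh_eq; auto).
  rewrite (ssum_center _ _ (f x) MR), (ssum_center _ _ (f x) p).
  pose proof (weighted_bound s Hge0 Hle1 C2 HC2 Hdec (fun m => Acell f n (P + Z.of_nat m) - f x) bh MR M0 eta (2 * B)
     HM0 ltac:(lia) bh_bound (fun m Hm => proj1 (Hnear m Hm)) Hfar1) as W1.
  pose proof (weighted_bound s Hge0 Hle1 C2 HC2 Hdec (fun m => Acell f n (P - 1 - Z.of_nat m) - f x) (fun m => bh (S m)) p M0 eta (2 * B)
     HM0 Hp bhS_bound (fun m Hm => proj2 (Hnear m Hm)) Hfar2) as W2.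
  pose proof (partial_diff s Hge0 C2 HC2 Hdec (fun m => bh (S m)) (MR - 1) p M0 HM0 ltac:(lia) Hp bhS_bound) as W3.
  assert (HT1 : ssum bh MR = / 2 + ssum (fun m => bh (S m)) (MR - 1)).
  { replace MR with (S (MR - 1)) at 1 by lia. rewrite ssum_front, bh0. reflexivity. }
  rewrite HT1.
  pose proof (HB x ltac:(lra)) as Hfx.
  set (S1 := ssum (fun m => (Acell f n (P + Z.of_nat m) - f x) * bh m) MR) in *.
  set (S2 := ssum (fun m => (Acell f n (P - 1 - Z.of_nat m) - f x) * bh (S m)) p) in *.
  set (T1 := ssum (fun m => bh (S m)) (MR - 1)) in *. set (T2 := ssum (fun m => bh (S m)) p) in *.
  replace (S1 + f x * (/ 2 + T1) - (S2 + f x * T2) - f x / 2) with (S1 - S2 + f x * (T1 - T2)) by field.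
  eapply Rle_trans. apply Rabs_triang. eapply Rle_trans. apply Rplus_le_compat_r. apply Rabs_triang.
  rewrite Rabs_Ropp, Rabs_mult.
  assert (Rabs (f x) * Rabs (T1 - T2) <= B * (C2 / (INR M0 - 2))).
  { apply Rmult_le_compat; auto; apply Rabs_pos. }
  assert (eta * (3 + C2) = tau / 4) by (unfold eta; field; lra).
  lra.
Qed.

End Ends.

Section SumB.
Variable s : R -> R.
Hypothesis Hmono : forall x y, x <= y -> s x <= s y.
Hypothesis Hge0 : forall x, 0 <= s x.
Hypothesis Hle1 : forall x, s x <= 1.
Hypothesis Hlim1 : is_lim s p_infty 1.
Hypothesis Hodd : Sigma1 s.
Hypothesis Hconc : forall x y t, 0 <= x -> 0 <= y -> 0 <= t <= 1 ->
     t * s x + (1 - t) * s y <= s (t * x + (1 - t) * y).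
Hypothesis Hs1 : s 1 < 1.
Variable C2 : R.
Hypothesis HC2 : 0 < C2.
Hypothesis Hdec : forall x, x <= -1 -> s x <= C2 / (x * x).
Variables (a b : R) (f : R -> R).
Hypothesis Hab : a < b.
Variable B : R.
Hypothesis HB0 : 0 <= B.
Hypothesis HB : forall t, a <= t <= b -> Rabs (f t) <= B.

Lemma sum_bound n th eps P Q :
  3 <= INR n * (b - a) -> 0 <= th <= / 2 -> 0 <= eps <= 1 ->
  (forall t, a <= t <= b -> Rabs (Kant s a b n f t - f t) <= eps / INR n) ->
  (Kl a n + 3 <= P)%Z -> (P <= Q)%Z -> (Q + 3 <= Kr b n)%Z ->
  Rabs (ssum (fun l => Nsum s a b n f (IZR P + INR l + th) - f ((IZR P + INR l + th) / INR n)) (Z.to_nat (Q - P)))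
  <= INR (Z.to_nat (Q - P)) * (eps / INR n) +
     (B + 1) * (C2 / (INR (Z.to_nat (P - Kl a n)) - 2) + C2 / (INR (Z.to_nat (Kr b n - Q)) - 2)).
Proof.
  intros H3 Hth Heps Hyp HP HPQ HQ.
  assert (Hn0 : 0 < INR n).
  { destruct (Rlt_or_le 0 (INR n)) as [H|H]; auto. assert (INR n = 0) by (pose proof (pos_INR n); lra).
    rewrite H0 in H3. lra. }
  assert (Hn1 : 1 <= INR n).
  { destruct n. simpl in Hn0. lra. rewrite S_INR. pose proof (pos_INR n). lra. }
  set (J := Z.to_nat (Q - P)). set (p := Z.to_nat (P - Kl a n)). set (r := Z.to_nat (Kr b n - Q)).
  assert (HpR : IZR P = IZR (Kl a n) + INR p) by (unfold p; rewrite INR_IZR_INZ, Z2Nat.id by lia; rewrite minus_IZR; ring).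
  assert (HJR : IZR Q = IZR P + INR J) by (unfold J; rewrite INR_IZR_INZ, Z2Nat.id by lia; rewrite minus_IZR; ring).
  assert (HrR : IZR (Kr b n) = IZR Q + INR r) by (unfold r; rewrite INR_IZR_INZ, Z2Nat.id by lia; rewrite minus_IZR; ring).
  pose proof (Kl_Kr a b n H3) as HK.
  assert (HLL : IZR (Kl a n) + INR (LL a b n) = IZR (Kr b n)) by (apply LL_spec; lia).
  pose proof (Rceil_spec (INR n * a)) as HK0. pose proof (Rfloor_spec (INR n * b)) as HK1.
  fold (Kl a n) in HK0. fold (Kr b n) in HK1.
  assert (Hterm : forall l, (l < J)%nat ->
    Rabs (Nsum s a b n f (IZR P + INR l + th) - f ((IZR P + INR l + th) / INR n)) <=
    eps / INR n + (B + 1) * (rho s (p + l) + rho s (r + (J - 1 - l)))).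
  { intros l Hl.
    set (u := IZR P + INR l + th).
    assert (HlJ : INR l + 1 <= INR J) by (rewrite <- S_INR; apply le_INR; lia).
    pose proof (pos_INR l). pose proof (pos_INR p). pose proof (pos_INR r).
    assert (Hu : INR n * a <= u <= INR n * b) by (unfold u; lra).
    assert (Ht : a <= u / INR n <= b).
    { split; apply Rmult_le_reg_l with (INR n); auto; field_simplify; lra. }
    specialize (Hyp _ Ht). rewrite Kant_eq in Hyp.
    replace (INR n * (u / INR n)) with u in Hyp by (field; lra).
    assert (HD : 0 < Dsum s a b n u) by (apply (Dsum_pos s Hmono Hlim1 Hodd Hconc Hs1); auto).
    set (N := Nsum s a b n f u) in *. set (D := Dsum s a b n u) in *.
    assert (HKb : Rabs (N / D) <= B + 1).
    { pose proof (HB _ Ht).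
      assert (eps / INR n <= 1).
      { apply Rmult_le_reg_r with (INR n); auto. unfold Rdiv. rewrite Rmult_assoc, Rinv_l; lra. }
      pose proof (Rabs_triang_inv (N / D) (f (u / INR n))). lra. }
    assert (H1D : 0 <= 1 - D <= rho s (p + l) + rho s (r + (J - 1 - l))).
    { unfold D. rewrite Dsum_eq. replace (u - IZR (Kl a n) - INR (LL a b n) + 1) with (u - IZR (Kr b n) + 1) by lra.
      unfold GG, rho. rewrite !plus_INR, !minus_INR by lia. simpl (INR 1).
      assert (E1 : s (1 - (INR p + INR l)) >= s (- (u - IZR (Kl a n) + 1)) /\ s (1 - (INR p + INR l)) >= s (1 - (u - IZR (Kl a n) + 1))).
      { split; apply Rle_ge; apply Hmono; unfold u; lra. }
      assert (E2 : s (1 - (INR r + (INR J - 1 - INR l))) >= s (u - IZR (Kr b n) + 1) /\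
                   s (u - IZR (Kr b n) + 1) >= s (u - IZR (Kr b n) + 1 - 1)).
      { split; apply Rle_ge; apply Hmono; unfold u; lra. }
      pose proof (sig_opp s Hodd (u - IZR (Kl a n) + 1)).
      pose proof (sig_opp s Hodd (u - IZR (Kl a n) + 1 - 1)) as Hq.
      replace (- (u - IZR (Kl a n) + 1 - 1)) with (1 - (u - IZR (Kl a n) + 1)) in Hq by ring.
      pose proof (Hge0 (u - IZR (Kr b n) + 1)). pose proof (Hge0 (u - IZR (Kr b n) + 1 - 1)).
      pose proof (Hge0 (- (u - IZR (Kl a n) + 1))). pose proof (Hge0 (1 - (u - IZR (Kl a n) + 1))).
      lra. }
    replace (N - f (u / INR n)) with ((N / D - f (u / INR n)) + (N / D) * (D - 1))
      by (field; lra).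
    eapply Rle_trans. apply Rabs_triang. apply Rplus_le_compat; auto.
    rewrite Rabs_mult. apply Rmult_le_compat; try apply Rabs_pos; auto.
    rewrite Rabs_minus_sym, Rabs_right; lra. }
  eapply Rle_trans. apply ssum_abs.
  eapply Rle_trans. apply ssum_le. apply Hterm.
  rewrite ssum_plus, ssum_const, ssum_scal, ssum_plus.
  apply Rplus_le_compat_l. apply Rmult_le_compat_l. lra.
  apply Rplus_le_compat.
  - apply rho_tail; auto. unfold p; lia.
  - rewrite (ssum_rev (fun l => rho s (r + (J - 1 - l)))).
    rewrite (ssum_ext _ (fun l => rho s (r + l))).
    apply rho_tail; auto. unfold r; lia.
    intros i Hi. f_equal. lia.
Qed.

End SumB.

Lemma choose_M K C2 tau : 0 <= K -> 0 < C2 -> 0 < tau ->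
  exists M : nat, (3 <= M)%nat /\ K * (C2 / (INR M - 2)) <= tau.
Proof.
  intros HK HC Ht. destruct (exists_nat_ge (K * C2 / tau)) as [N HN].
  exists (N + 3)%nat. split. lia.
  specialize (HN N (le_n _)). rewrite plus_INR. simpl (INR 3).
  assert (0 <= K * C2 / tau) by (apply Rdiv_le_0_compat; [apply Rmult_le_pos; lra | lra]).
  set (D := INR N + (1 + 1 + 1) - 2) in *.
  assert (HD : 0 < D) by (unfold D; lra).
  replace (K * (C2 / D)) with ((K * C2) / D) by (field; lra).
  apply Rmult_le_reg_r with D; auto.
  replace ((K * C2) / D * D) with (K * C2) by (field; lra).
  assert (K * C2 <= tau * INR N).
  { apply Rmult_le_reg_r with (/ tau). apply Rinv_0_lt_compat; auto.
    replace (tau * INR N * / tau) with (INR N) by (field; lra). auto. }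
  unfold D. nra.
Qed.

Lemma tail_mono C2 p M : 0 < C2 -> (3 <= M)%nat -> (M <= p)%nat -> C2 / (INR p - 2) <= C2 / (INR M - 2).
Proof.
  intros HC H3 Hp. apply le_INR in H3, Hp. simpl in H3.
  unfold Rdiv. apply Rmult_le_compat_l. lra. apply Rinv_le_contravar; lra.
Qed.

Lemma Acell_split a b f n k : a < b -> continuous_on_ab f a b -> 0 < INR n ->
  a <= IZR k / INR n -> (IZR k + 1) / INR n <= b ->
  Acell f (2 * n) (2 * k) + Acell f (2 * n) (2 * k + 1) = 2 * Acell f n k.
Proof.
  intros Hab Hc Hn H1 H2. unfold Acell. rewrite mult_INR. simpl (INR 2).
  rewrite !plus_IZR, !mult_IZR. simpl (IZR 2).
  replace (2 * IZR k / ((1 + 1) * INR n)) with (IZR k / INR n) by (field; lra).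
  replace ((2 * IZR k + 1 + 1) / ((1 + 1) * INR n)) with ((IZR k + 1) / INR n) by (field; lra).
  replace ((2 * IZR k + 1) / ((1 + 1) * INR n)) with ((IZR k + / 2) / INR n) by (field; lra).
  assert (IZR k / INR n <= (IZR k + / 2) / INR n) by (apply Rmult_le_reg_l with (INR n); auto; field_simplify; lra).
  assert ((IZR k + / 2) / INR n <= (IZR k + 1) / INR n) by (apply Rmult_le_reg_l with (INR n); auto; field_simplify; lra).
  rewrite <- (RInt_Chasles f (IZR k / INR n) ((IZR k + / 2) / INR n) ((IZR k + 1) / INR n)).
  - change (plus ?u ?v) with (u + v). ring.
  - apply (ex_RInt_f a b f Hab Hc); lra.
  - apply (ex_RInt_f a b f Hab Hc); lra.
Qed.

Lemma small_zero z c : (forall tau, 0 < tau -> Rabs z <= c * tau) -> z = 0.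
Proof.
  intros H. destruct (Req_dec z 0) as [E|E]; auto.
  assert (Hz : 0 < Rabs z) by (apply Rabs_pos_lt; auto).
  assert (Hc : 0 < c).
  { specialize (H 1 Rlt_0_1). lra. }
  specialize (H (Rabs z / (2 * c)) ltac:(apply Rdiv_lt_0_compat; lra)).
  replace (c * (Rabs z / (2 * c))) with (Rabs z / 2) in H by (field; lra). lra.
Qed.

Lemma scale_ok a b x y m P Q M1 : (3 <= M1)%nat ->
  INR m * x - 2 <= IZR P -> IZR Q <= INR m * y ->
  INR M1 + 3 <= INR m * (x - a) -> INR M1 + 3 <= INR m * (b - y) ->
  (Kl a m + 3 <= P)%Z /\ (Q + 3 <= Kr b m)%Z /\
  (M1 <= Z.to_nat (P - Kl a m))%nat /\ (M1 <= Z.to_nat (Kr b m - Q))%nat.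
Proof.
  intros H3 HP HQ Hx Hy.
  pose proof (Rceil_spec (INR m * a)) as HK0. pose proof (Rfloor_spec (INR m * b)) as HK1.
  fold (Kl a m) in HK0. fold (Kr b m) in HK1.
  assert (E1 : IZR (Kl a m) + INR M1 < IZR P) by lra.
  assert (E2 : IZR Q + INR M1 < IZR (Kr b m)) by lra.
  rewrite INR_IZR_INZ, <- plus_IZR in E1, E2. apply lt_IZR in E1, E2.
  lia.
Qed.

Lemma forward_pair (s : R -> R) a b f C2 :
  (forall x y, x <= y -> s x <= s y) -> (forall x, 0 <= s x) -> (forall x, s x <= 1) ->
  (forall x, s (- x) = 1 - s x) -> is_lim s p_infty 1 -> Sigma1 s ->
  (forall x y t, 0 <= x -> 0 <= y -> 0 <= t <= 1 ->
     t * s x + (1 - t) * s y <= s (t * x + (1 - t) * y)) -> s 1 < 1 ->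
  0 < C2 -> (forall x, x <= -1 -> s x <= C2 / (x * x)) ->
  a < b -> continuous_on_ab f a b ->
  (forall eps, 0 < eps -> exists N : nat, forall n : nat, (N <= n)%nat ->
      forall x, a <= x <= b -> Rabs (Kant s a b n f x - f x) <= eps / INR n) ->
  forall x y, a < x -> x < y -> y < b -> f x = f y.
Proof.
  intros Hmono Hge0 Hle1 Hopp Hlim1 Hodd Hconc Hs1 HC2 Hdec Hab Hc Hyp x y Hax Hxy Hyb.
  destruct (f_bounded a b f Hab Hc) as [B [HB0 HB]].
  cut (f y - f x = 0). lra.
  apply (small_zero _ 24). intros tau Htau.
  set (eps := Rmin 1 (tau / (b - a + 1))).
  assert (Heps : 0 < eps) by (unfold eps; apply Rmin_glb_lt; [lra | apply Rdiv_lt_0_compat; lra]).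
  assert (Heps1 : eps <= 1) by apply Rmin_l.
  assert (Heps2 : eps * (b - a + 1) <= tau).
  { apply Rle_trans with (tau / (b - a + 1) * (b - a + 1)).
    apply Rmult_le_compat_r. lra. apply Rmin_r. right; field; lra. }
  destruct (Hyp eps Heps) as [N HN].
  destruct (End0_lim s Hmono Hge0 Hle1 Hopp C2 HC2 Hdec a b f Hab Hc B HB0 HB x tau ltac:(lra) Htau) as [R1 HR1].
  destruct (End0_lim s Hmono Hge0 Hle1 Hopp C2 HC2 Hdec a b f Hab Hc B HB0 HB y tau ltac:(lra) Htau) as [R2 HR2].
  destruct (EndH_lim s Hmono Hge0 Hle1 Hopp C2 HC2 Hdec a b f Hab Hc B HB0 HB x tau ltac:(lra) Htau) as [R3 HR3].
  destruct (EndH_lim s Hmono Hge0 Hle1 Hopp C2 HC2 Hdec a b f Hab Hc B HB0 HB y tau ltac:(lra) Htau) as [R4 HR4].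
  destruct (choose_M (2 * (B + 1)) C2 tau ltac:(lra) HC2 Htau) as [M1 [HM1 HM1']].
  destruct (exists_nat_ge (Rmax (Rmax (Rmax R1 R2) (Rmax R3 R4))
             (Rmax (Rmax ((INR M1 + 3) / (x - a)) ((INR M1 + 3) / (b - y))) (3 / (b - a))))) as [N2 HN2].
  set (n := Nat.max N N2).
  specialize (HN2 n ltac:(unfold n; lia)).
  assert (HR1n : R1 <= INR n).
  { eapply Rle_trans; [|apply HN2]. eapply Rle_trans; [|apply Rmax_l]. eapply Rle_trans; [|apply Rmax_l]. apply Rmax_l. }
  assert (HR2n : R2 <= INR n).
  { eapply Rle_trans; [|apply HN2]. eapply Rle_trans; [|apply Rmax_l]. eapply Rle_trans; [|apply Rmax_l]. apply Rmax_r. }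
  assert (HR3n : R3 <= INR n).
  { eapply Rle_trans; [|apply HN2]. eapply Rle_trans; [|apply Rmax_l]. eapply Rle_trans; [|apply Rmax_r]. apply Rmax_l. }
  assert (HR4n : R4 <= INR n).
  { eapply Rle_trans; [|apply HN2]. eapply Rle_trans; [|apply Rmax_l]. eapply Rle_trans; [|apply Rmax_r]. apply Rmax_r. }
  assert (Hq1 : (INR M1 + 3) / (x - a) <= INR n).
  { eapply Rle_trans; [|apply HN2]. eapply Rle_trans; [|apply Rmax_r]. eapply Rle_trans; [|apply Rmax_l]. apply Rmax_l. }
  assert (Hq2 : (INR M1 + 3) / (b - y) <= INR n).
  { eapply Rle_trans; [|apply HN2]. eapply Rle_trans; [|apply Rmax_r]. eapply Rle_trans; [|apply Rmax_l]. apply Rmax_r. }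
  assert (Hq3 : 3 / (b - a) <= INR n).
  { eapply Rle_trans; [|apply HN2]. eapply Rle_trans; [|apply Rmax_r]. apply Rmax_r. }
  pose proof (pos_INR M1).
  assert (Hxa : INR M1 + 3 <= INR n * (x - a)).
  { apply Rmult_le_reg_r with (/ (x - a)). apply Rinv_0_lt_compat; lra.
    replace (INR n * (x - a) * / (x - a)) with (INR n) by (field; lra). auto. }
  assert (Hby : INR M1 + 3 <= INR n * (b - y)).
  { apply Rmult_le_reg_r with (/ (b - y)). apply Rinv_0_lt_compat; lra.
    replace (INR n * (b - y) * / (b - y)) with (INR n) by (field; lra). auto. }
  assert (Hba : 3 <= INR n * (b - a)).
  { apply Rmult_le_reg_r with (/ (b - a)). apply Rinv_0_lt_compat; lra.
    replace (INR n * (b - a) * / (b - a)) with (INR n) by (field; lra). auto. }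
  assert (Hn0 : 0 < INR n) by nra.
  assert (Hn1 : 1 <= INR n).
  { destruct n. simpl in Hn0; lra. rewrite S_INR; pose proof (pos_INR n); lra. }
  assert (H2n : INR (2 * n) = 2 * INR n) by (rewrite mult_INR; simpl; ring).
  set (P := Rfloor (INR n * x)). set (Q := Rfloor (INR n * y)).
  pose proof (Rfloor_spec (INR n * x)) as HPs. pose proof (Rfloor_spec (INR n * y)) as HQs.
  fold P in HPs. fold Q in HQs.
  assert (HPQ : (P <= Q)%Z).
  { apply Z.lt_succ_r. apply lt_IZR. rewrite succ_IZR. nra. }
  destruct (scale_ok a b x y n P Q M1 HM1 ltac:(lra) ltac:(lra) Hxa Hby) as [S1a [S1b [S1c S1d]]].
  destruct (scale_ok a b x y (2 * n) (2 * P) (2 * Q) M1 HM1) as [S2a [S2b [S2c S2d]]].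
  { rewrite H2n, mult_IZR. lra. }
  { rewrite H2n, mult_IZR. nra. }
  { rewrite H2n. nra. }
  { rewrite H2n. nra. }
  pose proof (HN n ltac:(unfold n; lia)) as HNn.
  pose proof (HN (2 * n)%nat ltac:(unfold n; lia)) as HN2n.
  pose proof (sum_bound s Hmono Hge0 Hlim1 Hodd Hconc Hs1 C2 HC2 Hdec a b f B HB0 HB n 0 eps P Q
     Hba ltac:(lra) ltac:(lra) HNn S1a HPQ S1b) as B1.
  pose proof (sum_bound s Hmono Hge0 Hlim1 Hodd Hconc Hs1 C2 HC2 Hdec a b f B HB0 HB n (/ 2) eps P Q
     Hba ltac:(lra) ltac:(lra) HNn S1a HPQ S1b) as B2.
  pose proof (sum_bound s Hmono Hge0 Hlim1 Hodd Hconc Hs1 C2 HC2 Hdec a b f B HB0 HB (2 * n) 0 eps (2 * P) (2 * Q)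
     ltac:(rewrite H2n; nra) ltac:(lra) ltac:(lra) HN2n S2a ltac:(lia) S2b) as B3.
  rewrite ssum_minus in B1, B2, B3.
  rewrite (sum_identity s a b n f 0 P Q) in B1 by lia.
  rewrite (sum_identity s a b n f (/ 2) P Q) in B2 by lia.
  rewrite (sum_identity s a b (2 * n) f 0 (2 * P) (2 * Q)) in B3 by lia.
  set (J := Z.to_nat (Q - P)) in *.
  assert (HJ2 : Z.to_nat (2 * Q - 2 * P) = (2 * J)%nat) by (unfold J; lia).
  rewrite HJ2 in B3.
  assert (HSA : ssum (fun l => Acell f (2 * n) (2 * P + Z.of_nat l)) (2 * J) =
                2 * ssum (fun l => Acell f n (P + Z.of_nat l)) J).
  { rewrite ssum_pair, <- ssum_scal. apply ssum_ext. intros l Hl.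
    replace (2 * P + Z.of_nat (2 * l))%Z with (2 * (P + Z.of_nat l))%Z by lia.
    replace (2 * P + Z.of_nat (2 * l + 1))%Z with (2 * (P + Z.of_nat l) + 1)%Z by lia.
    assert (Hk1 : (Kl a n <= P + Z.of_nat l)%Z) by lia.
    assert (Hk2 : (P + Z.of_nat l + 1 <= Kr b n)%Z) by (unfold J in Hl; lia).
    destruct (cell_in a b n _ Hn0 Hk1 Hk2).
    apply (Acell_split a b); auto. }
  assert (HR : ssum (fun l => f ((IZR (2 * P) + INR l + 0) / INR (2 * n))) (2 * J) =
     ssum (fun l => f ((IZR P + INR l + 0) / INR n)) J + ssum (fun l => f ((IZR P + INR l + / 2) / INR n)) J).
  { rewrite ssum_pair, <- ssum_plus. apply ssum_ext. intros l Hl.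
    rewrite H2n, mult_IZR, plus_INR, !mult_INR. simpl (INR 1). simpl (IZR 2). simpl (INR 2).
    f_equal; f_equal; field; lra. }
  rewrite HSA, HR in B3.
  rewrite H2n in B3.
  assert (HJ : INR J = IZR Q - IZR P) by (unfold J; rewrite INR_IZR_INZ, Z2Nat.id by lia; rewrite minus_IZR; ring).
  assert (HJ' : INR (2 * J) = 2 * (IZR Q - IZR P)) by (rewrite mult_INR, HJ; simpl; ring).
  rewrite HJ' in B3.
  set (T := C2 / (INR M1 - 2)) in *.
  assert (Ht1 : C2 / (INR (Z.to_nat (P - Kl a n)) - 2) <= T) by (apply tail_mono; auto).
  assert (Ht2 : C2 / (INR (Z.to_nat (Kr b n - Q)) - 2) <= T) by (apply tail_mono; auto).
  assert (Ht3 : C2 / (INR (Z.to_nat (2 * P - Kl a (2 * n))) - 2) <= T) by (apply tail_mono; auto).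
  assert (Ht4 : C2 / (INR (Z.to_nat (Kr b (2 * n) - 2 * Q)) - 2) <= T) by (apply tail_mono; auto).
  assert (HJe : (IZR Q - IZR P) * (eps / INR n) <= tau).
  { apply Rle_trans with ((INR n * (b - a) + 1) * (eps / INR n)).
    apply Rmult_le_compat_r. apply Rdiv_le_0_compat; lra. nra.
    replace ((INR n * (b - a) + 1) * (eps / INR n)) with (eps * (b - a) + eps / INR n) by (field; lra).
    assert (eps / INR n <= eps).
    { apply Rmult_le_reg_r with (INR n); auto. unfold Rdiv. rewrite Rmult_assoc, Rinv_l; nra. }
    lra. }
  assert (HJe2 : 2 * (IZR Q - IZR P) * (eps / (2 * INR n)) = (IZR Q - IZR P) * (eps / INR n)) by (field; lra).
  rewrite HJ in B1, B2. rewrite HJe2 in B3.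
  assert (Htail : (B + 1) * (T + T) <= tau) by lra.
  assert (HT1 : (B + 1) * (C2 / (INR (Z.to_nat (P - Kl a n)) - 2) + C2 / (INR (Z.to_nat (Kr b n - Q)) - 2)) <= tau)
    by (apply Rle_trans with ((B + 1) * (T + T)); auto; apply Rmult_le_compat_l; lra).
  assert (HT2 : (B + 1) * (C2 / (INR (Z.to_nat (2 * P - Kl a (2 * n))) - 2) + C2 / (INR (Z.to_nat (Kr b (2 * n) - 2 * Q)) - 2)) <= tau)
    by (apply Rle_trans with ((B + 1) * (T + T)); auto; apply Rmult_le_compat_l; lra).
  assert (HPx : Rabs (IZR P - INR n * x) <= 2) by (apply Rabs_le; lra).
  assert (HQy : Rabs (IZR Q - INR n * y) <= 2) by (apply Rabs_le; lra).
  assert (HPx2 : Rabs (IZR (2 * P) - INR (2 * n) * x) <= 2) by (rewrite H2n, mult_IZR; apply Rabs_le; lra).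
  assert (HQy2 : Rabs (IZR (2 * Q) - INR (2 * n) * y) <= 2) by (rewrite H2n, mult_IZR; apply Rabs_le; lra).
  assert (HR1n2 : R1 <= INR (2 * n)) by (rewrite H2n; lra).
  assert (HR2n2 : R2 <= INR (2 * n)) by (rewrite H2n; lra).
  pose proof (HR1 n HR1n P HPx) as E1. pose proof (HR2 n HR2n Q HQy) as E2.
  pose proof (HR3 n HR3n P HPx) as E3. pose proof (HR4 n HR4n Q HQy) as E4.
  pose proof (HR1 (2 * n)%nat HR1n2 (2 * P)%Z HPx2) as E5. pose proof (HR2 (2 * n)%nat HR2n2 (2 * Q)%Z HQy2) as E6.
  apply Rabs_le_between in E1, E2, E3, E4, E5, E6, B1, B2, B3.
  apply Rabs_le. lra.
Qed.

Lemma const_from_interior a b f c : a < b -> continuous_on_ab f a b ->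
  (forall x, a < x < b -> f x = c) -> forall x, a <= x <= b -> f x = c.
Proof.
  intros Hab Hc Hi x Hx.
  destruct (Rlt_or_le a x) as [H1|H1]; [destruct (Rlt_or_le x b) as [H2|H2]|].
  - apply Hi; lra.
  - assert (x = b) by lra. subst x.
    apply Rminus_diag_uniq. apply (small_zero _ 1). intros eta Heta.
    destruct (Hc b ltac:(lra) eta Heta) as [d [Hd Hd']].
    set (y := b - Rmin d (b - a) / 2).
    assert (0 < Rmin d (b - a)) by (apply Rmin_glb_lt; lra).
    pose proof (Rmin_l d (b - a)). pose proof (Rmin_r d (b - a)).
    assert (Hy : a < y < b) by (unfold y; lra).
    specialize (Hd' y ltac:(lra) ltac:(unfold y; rewrite Rabs_left; lra)).
    rewrite (Hi y Hy) in Hd'. rewrite Rabs_minus_sym in Hd'. lra.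
  - assert (x = a) by lra. subst x.
    apply Rminus_diag_uniq. apply (small_zero _ 1). intros eta Heta.
    destruct (Hc a ltac:(lra) eta Heta) as [d [Hd Hd']].
    set (y := a + Rmin d (b - a) / 2).
    assert (0 < Rmin d (b - a)) by (apply Rmin_glb_lt; lra).
    pose proof (Rmin_l d (b - a)). pose proof (Rmin_r d (b - a)).
    assert (Hy : a < y < b) by (unfold y; lra).
    specialize (Hd' y ltac:(lra) ltac:(unfold y; rewrite Rabs_right; lra)).
    rewrite (Hi y Hy) in Hd'. rewrite Rabs_minus_sym in Hd'. lra.
Qed.

Theorem theorem6p1 (sigma : R -> R) (a b : R) (f : R -> R) :
  a < b ->
  sigmoidal sigma -> Sigma1 sigma -> Sigma2 sigma ->
  (exists alpha, 2 < alpha /\ Sigma3_with sigma alpha) ->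
  sigma 1 < 1 ->
  continuous_on_ab f a b ->
  ((* || K_n(f,.) - f ||_inf = o(1/n) *)
   (forall eps, 0 < eps -> exists N : nat, forall n : nat, (N <= n)%nat ->
      forall x, a <= x <= b ->
        Rabs (Kant sigma a b n f x - f x) <= eps / INR n)
   <->
   (exists c, forall x, a <= x <= b -> f x = c)).
Proof.
  intros Hab [Hmono [Hlim0 Hlim1]] Hodd [_ [_ [_ Hconc]]] [alpha [Halpha H3]] Hs1 Hc.
  pose proof (sig_ge0 sigma Hmono Hlim0) as Hge0.
  pose proof (sig_le1 sigma Hmono Hlim0 Hodd) as Hle1.
  pose proof (sig_opp sigma Hodd) as Hopp.
  split.
  - intros Hyp.
    destruct (decay_bound sigma alpha Hle1 Halpha H3) as [C2 [HC2 Hdec]].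
    exists (f ((a + b) / 2)).
    apply const_from_interior; auto.
    intros x Hx.
    pose proof (forward_pair sigma a b f C2 Hmono Hge0 Hle1 Hopp Hlim1 Hodd Hconc Hs1 HC2 Hdec Hab Hc Hyp) as FP.
    destruct (Rtotal_order x ((a + b) / 2)) as [H|[H|H]].
    + apply FP; lra.
    + rewrite H; reflexivity.
    + symmetry. apply FP; lra.
  - intros [c Hf]. apply (backward sigma a b f c); auto.
Qed.
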